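(* Let $r,n\geq1$, let $Z_n=\mathbb{C}^{2n}/((\mathbb{Z}/r\mathbb{Z})\wr S_n)$, let $R_n=\mathbb{C}[x_1,\dots,x_n,y_1,\dots,y_n,z_1,\dots,z_n]$ with $S_n$ acting by simultaneously permuting the indices of the $x_i,y_i,z_i$, and let $I_n=(x_1y_1-z_1^r,\dots,x_ny_n-z_n^r)\subset R_n$. Then \[\mathbb{C}[Z_n]\simeq R_n^{S_n}/I_n^{S_n},\] where $I_n^{S_n}=I_n\cap R_n^{S_n}$; more precisely, the natural map $R_n^{S_n}/I_n^{S_n}\to (R_n/I_n)^{S_n}\simeq \mathbb{C}[Z_n]$ is an isomorphism.
   Context: $(\mathbb{Z}/r\mathbb{Z})\wr S_n$ acts on $\mathbb{C}^{2n}$ with coordinates $(X_i,Y_i)_{i=1}^n$: the $i$-th copy of $\mathbb{Z}/r\mathbb{Z}$ acts by $(X_i,Y_i)\mapsto(\zeta X_i,\zeta^{-1}Y_i)$ ($\zeta^r=1$), and $S_n$ permutes the pairs. The identification $\mathbb{C}[Z_n]=\mathbb{C}[X,Y]^{(\mathbb{Z}/r\mathbb{Z})\wr S_n}\simeq (R_n/I_n)^{S_n}$ is given by $x_i\mapsto X_i^r$, $y_i\mapsto Y_i^r$, $z_i\mapsto X_iY_i$. *)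

(* Defs.v *)
From HB Require Import structures.
From mathcomp Require Import all_boot all_order all_algebra all_fingroup.
From mathcomp Require Import mpoly.
Set Implicit Arguments. Unset Strict Implicit. Unset Printing Implicit Defensive.
Import Order.TTheory GRing.Theory Num.Theory.
Local Open Scope ring_scope.

(* R_n = C[x_1..x_n, y_1..y_n, z_1..z_n] is {mpoly C[n + n + n]}:
   x_i = 'X_(lshift n (lshift n i)), y_i = 'X_(lshift n (rshift n i)),
   z_i = 'X_(rshift (n + n) i).
   C[X,Y] = C[X_1..X_n, Y_1..Y_n] is {mpoly C[n + n]}:
   X_i = 'X_(lshift n i), Y_i = 'X_(rshift n i). *)

Section Defs.
Variables (C : fieldType) (n : nat).

Definition xv (i : 'I_n) : {mpoly C[n + n + n]} := 'X_(lshift n (lshift n i)).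
Definition yv (i : 'I_n) : {mpoly C[n + n + n]} := 'X_(lshift n (rshift n i)).
Definition zv (i : 'I_n) : {mpoly C[n + n + n]} := 'X_(rshift (n + n) i).

Definition Xv (i : 'I_n) : {mpoly C[n + n]} := 'X_(lshift n i).
Definition Yv (i : 'I_n) : {mpoly C[n + n]} := 'X_(rshift n i).

Definition subst_xyz (k : nat) (fx fy fz : 'I_n -> {mpoly C[k]})
  (p : {mpoly C[n + n + n]}) : {mpoly C[k]} :=
  p \mPo [tuple match split j with
                | inl j' => match split j' with
                            | inl i => fx i
                            | inr i => fy i
                            end
                | inr i => fz i
                end | j < n + n + n].

Definition subst_XY (k : nat) (fX fY : 'I_n -> {mpoly C[k]})
  (p : {mpoly C[n + n]}) : {mpoly C[k]} :=
  p \mPo [tuple match split j with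
                | inl i => fX i
                | inr i => fY i
                end | j < n + n].

Definition perm_act (s : 'S_n) (p : {mpoly C[n + n + n]}) : {mpoly C[n + n + n]} :=
  subst_xyz (fun i => xv (s i)) (fun i => yv (s i)) (fun i => zv (s i)) p.

Definition Sn_invariant (p : {mpoly C[n + n + n]}) : Prop :=
  forall s : 'S_n, perm_act s p = p.

Definition in_In (r : nat) (p : {mpoly C[n + n + n]}) : Prop :=
  exists c : 'I_n -> {mpoly C[n + n + n]},
    p = \sum_(i < n) c i * (xv i * yv i - zv i ^+ r).

(* Action of the element (a, s) of (Z/rZ) wr S_n (a : 'I_n -> 'I_r, s : 'S_n)
   on C[X,Y]: the i-th copy of Z/rZ acts by (X_i, Y_i) |-> (zeta X_i, zeta^-1 Y_i)
   and S_n permutes the pairs (X_i, Y_i). *)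
Definition wreath_act (r : nat) (zeta : C) (a : 'I_n -> 'I_r) (s : 'S_n)
  (p : {mpoly C[n + n]}) : {mpoly C[n + n]} :=
  subst_XY (fun i => (zeta ^+ a i) *: Xv (s i))
           (fun i => (zeta^-1 ^+ a i) *: Yv (s i)) p.

(* C[X,Y]^{(Z/rZ) wr S_n} = C[Z_n] *)
Definition wreath_invariant (r : nat) (zeta : C) (p : {mpoly C[n + n]}) : Prop :=
  forall (a : 'I_n -> 'I_r) (s : 'S_n), wreath_act zeta a s p = p.

Definition phi (r : nat) (p : {mpoly C[n + n + n]}) : {mpoly C[n + n]} :=
  subst_xyz (fun i => Xv i ^+ r) (fun i => Yv i ^+ r) (fun i => Xv i * Yv i) p.

End Defs.

(* Main.v *)
Require Import Defs.
From HB Require Import structures.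
From mathcomp Require Import all_boot all_order all_algebra all_fingroup.
From mathcomp Require Import mpoly ring.
Set Implicit Arguments. Unset Strict Implicit. Unset Printing Implicit Defensive.
Import Order.TTheory GRing.Theory Num.Theory.
Local Open Scope ring_scope.

Section Gen.
Variables (C : fieldType) (n : nat).

Lemma split_l m k (i : 'I_m) : split (lshift k i) = inl i.
Proof. exact: (unsplitK (inl i)). Qed.
Lemma split_r m k (i : 'I_k) : split (rshift m i) = inr i.
Proof. exact: (unsplitK (inr i)). Qed.

Lemma comp_sum (k l : nat) (t : k.-tuple {mpoly C[l]}) I (r : seq I) (P : pred I) (F : I -> {mpoly C[k]}) :
  (\sum_(i <- r | P i) F i) \mPo t = \sum_(i <- r | P i) (F i \mPo t).
Proof. exact: (big_morph _ (comp_mpolyD t) (comp_mpoly0 t)). Qed.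

Lemma comp_comp (k l : nat) (p : {mpoly C[k]}) (t : k.-tuple {mpoly C[l]})
   (u : l.-tuple {mpoly C[n]}) :
  (p \mPo t) \mPo u = p \mPo [tuple (tnth t j) \mPo u | j < k].
Proof.
rewrite [p]mpolyE (comp_sum t) (comp_sum u) comp_sum; apply: eq_bigr => m _.
rewrite !comp_mpolyZ comp_mpolyX; congr (_ *: _).
rewrite comp_mpolyX rmorph_prod /=; apply: eq_bigr => i _.
by rewrite rmorphXn tnth_mktuple.
Qed.

Lemma prod3 (R : comNzRingType) (G : 'I_(n + n + n) -> R) :
  \prod_j G j = \prod_(i < n) (G (lshift n (lshift n i)) * G (lshift n (rshift n i)) * G (rshift (n + n) i)).
Proof.
by rewrite big_split_ord big_split_ord !big_split.
Qed.

Lemma prod2 (R : comNzRingType) (G : 'I_(n + n) -> R) :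
  \prod_j G j = \prod_(i < n) (G (lshift n i) * G (rshift n i)).
Proof. by rewrite big_split_ord big_split. Qed.

Lemma subst_xyzX k (fx fy fz : 'I_n -> {mpoly C[k]}) (m : 'X_{1..n + n + n}) :
  subst_xyz fx fy fz 'X_[m] = \prod_(i < n)
   (fx i ^+ m (lshift n (lshift n i)) * fy i ^+ m (lshift n (rshift n i)) * fz i ^+ m (rshift (n + n) i)).
Proof.
rewrite /subst_xyz comp_mpolyX prod3; apply: eq_bigr => i _.
by rewrite !tnth_mktuple (split_l n (lshift n i)) (split_l n i) (split_l n (rshift n i)) (split_r n i) (split_r (n + n) i).
Qed.

Lemma subst_XYX k (fX fY : 'I_n -> {mpoly C[k]}) (m : 'X_{1..n + n}) :
  subst_XY fX fY 'X_[m] = \prod_(i < n)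
   (fX i ^+ m (lshift n i) * fY i ^+ m (rshift n i)).
Proof.
rewrite /subst_XY comp_mpolyX prod2; apply: eq_bigr => i _.
by rewrite !tnth_mktuple (split_l n i) (split_r n i).
Qed.

Lemma XE3 (m : 'X_{1..n + n + n}) : 'X_[m] = \prod_(i < n)
   (xv C i ^+ m (lshift n (lshift n i)) * yv C i ^+ m (lshift n (rshift n i)) * zv C i ^+ m (rshift (n + n) i)).
Proof. by rewrite mpolyXE_id prod3. Qed.

Lemma XE2 (m : 'X_{1..n + n}) : 'X_[m] = \prod_(i < n)
   (Xv C i ^+ m (lshift n i) * Yv C i ^+ m (rshift n i)).
Proof. by rewrite mpolyXE_id prod2. Qed.

End Gen.

Section B.
Variables (C : fieldType) (n r : nat).
Local Notation lx i := (lshift n (lshift n i)).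
Local Notation ly i := (lshift n (rshift n i)).
Local Notation lz i := (rshift (n + n) i).
Local Notation LX i := (lshift n i).
Local Notation LY i := (rshift n i).
Local Notation I := (@in_In C n r).

Lemma inI0 : I 0.
Proof. by exists (fun _ => 0); rewrite big1 // => i _; rewrite mul0r. Qed.

Lemma inID p q : I p -> I q -> I (p + q).
Proof.
move=> [c1 ->] [c2 ->]; exists (fun i => c1 i + c2 i).
by rewrite -big_split /=; apply: eq_bigr => i _; rewrite mulrDl.
Qed.

Lemma inIM q p : I p -> I (q * p).
Proof.
move=> [c ->]; exists (fun i => q * c i).
by rewrite mulr_sumr; apply: eq_bigr => i _; rewrite mulrA.
Qed.

Lemma inIN p : I p -> I (- p).
Proof. by move=> h; rewrite -mulN1r; apply: inIM. Qed.

Lemma inIB p q : I p -> I q -> I (p - q).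
Proof. by move=> hp hq; apply: inID => //; apply: inIN. Qed.

Lemma inIgen i : I (xv C i * yv C i - zv C i ^+ r).
Proof.
exists (fun j => if j == i then 1 else 0).
rewrite (bigD1 i) //= eqxx mul1r big1 ?addr0 // => j /negbTE ->.
by rewrite mul0r.
Qed.

Lemma inIsum T (s : seq T) (P : pred T) (F : T -> {mpoly C[n + n + n]}) :
  (forall t, P t -> I (F t)) -> I (\sum_(t <- s | P t) F t).
Proof.
move=> h; elim/big_rec: _ => [|t x Pt hx]; first exact: inI0.
by apply: inID => //; apply: h.
Qed.

Lemma inIprod (F G : 'I_n -> {mpoly C[n + n + n]}) :
  (forall i, I (F i - G i)) -> I (\prod_i F i - \prod_i G i).
Proof.
move=> h; apply: (big_ind2 (fun a b => I (a - b))).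
- by rewrite subrr; apply: inI0.
- move=> a1 b1 a2 b2 h1 h2.
  have -> : a1 * a2 - b1 * b2 = a2 * (a1 - b1) + b1 * (a2 - b2).
    by ring.
  by apply: inID; apply: inIM.
- by move=> i _; apply: h.
Qed.

Lemma inI_loc (i : 'I_n) a b c : (0 < r)%N ->
  I (xv C i ^+ a * yv C i ^+ b * zv C i ^+ c -
     xv C i ^+ (((r * a + c) - (r * b + c)) %/ r) * yv C i ^+ (((r * b + c) - (r * a + c)) %/ r)
      * zv C i ^+ minn (r * a + c) (r * b + c)).
Proof.
move=> r0.
set x := xv C i; set y := yv C i; set z := zv C i.
have key : forall k, I ((x * y) ^+ k - (z ^+ r) ^+ k).
  move=> k; rewrite subrXX mulrC; apply: inIM; exact: inIgen.
case: (leqP b a) => hab.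
- have hvu : (r * b + c <= r * a + c)%N by rewrite leq_add2r leq_mul2l hab orbT.
  rewrite (minn_idPr hvu) subnDr -mulnBr mulKn //.
  have -> : (r * b + c - (r * a + c) = 0)%N by apply/eqP; rewrite subn_eq0.
  rewrite div0n expr0 mulr1.
  have -> : x ^+ a * y ^+ b * z ^+ c - x ^+ (a - b) * z ^+ (r * b + c)
     = (x ^+ (a - b) * z ^+ c) * ((x * y) ^+ b - (z ^+ r) ^+ b).
    rewrite -{1}(subnK hab) exprD exprMn -exprM exprD; ring.
  exact: inIM.
- have hab' := ltnW hab.
  have hvu : (r * a + c <= r * b + c)%N by rewrite leq_add2r leq_mul2l hab' orbT.
  have -> : (r * a + c - (r * b + c) = 0)%N by apply/eqP; rewrite subn_eq0.
  rewrite (minn_idPl hvu) subnDr -mulnBr mulKn //.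
  rewrite div0n expr0 mul1r.
  have -> : x ^+ a * y ^+ b * z ^+ c - y ^+ (b - a) * z ^+ (r * a + c)
     = (y ^+ (b - a) * z ^+ c) * ((x * y) ^+ a - (z ^+ r) ^+ a).
    rewrite -{1}(subnK hab') exprD exprMn -exprM exprD; ring.
  exact: inIM.
Qed.

Definition emn (m : 'X_{1..n + n + n}) : 'X_{1..n + n} :=
  [multinom (match split j with
             | inl i => r * m (lx i) + m (lz i)
             | inr i => r * m (ly i) + m (lz i) end)%N | j < n + n].

Definition wmn (m : 'X_{1..n + n}) : 'X_{1..n + n + n} :=
  [multinom (match split j with
             | inl j' => match split j' with
                         | inl i => (m (LX i) - m (LY i)) %/ r
                         | inr i => (m (LY i) - m (LX i)) %/ r end
             | inr i => minn (m (LX i)) (m (LY i)) end)%N | j < n + n + n].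

Lemma emnX m i : emn m (LX i) = (r * m (lx i) + m (lz i))%N.
Proof. by rewrite mnmE (split_l n i). Qed.
Lemma emnY m i : emn m (LY i) = (r * m (ly i) + m (lz i))%N.
Proof. by rewrite mnmE (split_r n i). Qed.
Lemma wmnx m i : wmn m (lx i) = ((m (LX i) - m (LY i)) %/ r)%N.
Proof. by rewrite mnmE (split_l n (lshift n i)) (split_l n i). Qed.
Lemma wmny m i : wmn m (ly i) = ((m (LY i) - m (LX i)) %/ r)%N.
Proof. by rewrite mnmE (split_l n (rshift n i)) (split_r n i). Qed.
Lemma wmnz m i : wmn m (lz i) = minn (m (LX i)) (m (LY i)).
Proof. by rewrite mnmE (split_r (n + n) i). Qed.

Lemma phiX m : phi r 'X_[m] = 'X_[emn m] :> {mpoly C[n + n]}.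
Proof.
rewrite /phi subst_xyzX XE2; apply: eq_bigr => i _.
rewrite emnX emnY !exprD !exprM exprMn; ring.
Qed.

Lemma F2 m : (0 < r)%N -> I ('X_[m] - 'X_[wmn (emn m)]).
Proof.
move=> r0; rewrite XE3 [X in _ - X]XE3; apply: inIprod => i.
rewrite wmnx wmny wmnz !emnX !emnY; exact: inI_loc.
Qed.

Lemma F3 (m : 'X_{1..n + n}) : (0 < r)%N ->
  (forall i, m (LX i) = m (LY i) %[mod r]) -> emn (wmn m) = m.
Proof.
move=> r0 hm; apply/mnmP => j; rewrite -(splitK j).
case: (split j) => i /=.
- rewrite emnX wmnx wmnz.
  case: (leqP (m (LY i)) (m (LX i))) => h.
  + rewrite mulnC divnK ?subnK //.
    by rewrite -eqn_mod_dvd // (hm i).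
  + have -> : (m (LX i) - m (LY i) = 0)%N by apply/eqP; rewrite subn_eq0 ltnW.
    by rewrite div0n muln0.
- rewrite emnY wmny wmnz.
  case: (leqP (m (LX i)) (m (LY i))) => h.
  + rewrite mulnC divnK ?subnK //.
    by rewrite -eqn_mod_dvd // (hm i).
  + have -> : (m (LY i) - m (LX i) = 0)%N by apply/eqP; rewrite subn_eq0 ltnW.
    by rewrite div0n muln0.
Qed.

End B.

Ltac simpl_split := repeat match goal with
  | |- context [split (lshift ?k ?i)] => rewrite (split_l k i)
  | |- context [split (rshift ?m ?i)] => rewrite (split_r m i) end.

Section D0.
Variables (C : fieldType) (k l : nat) (t : k.-tuple {mpoly C[l]}).
Lemma compXn (p : {mpoly C[k]}) e : (p ^+ e) \mPo t = (p \mPo t) ^+ e.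
Proof. exact: rmorphXn. Qed.
Lemma compM (p q : {mpoly C[k]}) : (p * q) \mPo t = (p \mPo t) * (q \mPo t).
Proof. exact: rmorphM. Qed.
Lemma compB (p q : {mpoly C[k]}) : (p - q) \mPo t = (p \mPo t) - (q \mPo t).
Proof. exact: rmorphB. Qed.
End D0.

Section D.
Variables (C : fieldType) (n r : nat).
Local Notation lx i := (lshift n (lshift n i)).
Local Notation ly i := (lshift n (rshift n i)).
Local Notation lz i := (rshift (n + n) i).
Local Notation LX i := (lshift n i).
Local Notation LY i := (rshift n i).
Local Notation I := (@in_In C n r).

Lemma phiZ c p : phi r (c *: p) = c *: phi r p :> {mpoly C[n + n]}.
Proof. exact: comp_mpolyZ. Qed.
Lemma phi_sum T (s : seq T) (P : pred T) (F : T -> {mpoly C[n + n + n]}) :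
  phi r (\sum_(t <- s | P t) F t) = \sum_(t <- s | P t) phi r (F t).
Proof. exact: comp_sum. Qed.
Lemma permZ s c p : perm_act s (c *: p) = c *: perm_act s p :> {mpoly C[n + n + n]}.
Proof. exact: comp_mpolyZ. Qed.
Lemma perm_sum s T (l : seq T) (P : pred T) (F : T -> {mpoly C[n + n + n]}) :
  perm_act s (\sum_(t <- l | P t) F t) = \sum_(t <- l | P t) perm_act s (F t).
Proof. exact: comp_sum. Qed.

Lemma phi_perm (zeta : C) (hz : zeta ^+ r = 1) (hz0 : zeta != 0) (a : 'I_n -> 'I_r) (s : 'S_n) (p : {mpoly C[n + n + n]}) :
  phi r (perm_act s p) = wreath_act zeta a s (phi r p).
Proof.
rewrite /phi /perm_act /wreath_act /subst_xyz /subst_XY !comp_comp; congr (p \mPo _).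
apply: eq_from_tnth => j; rewrite !tnth_mktuple.
rewrite -(splitK j); case: (split j) => [j'|i]; rewrite unsplitK;
  [rewrite -(splitK j'); case: (split j') => i; rewrite unsplitK|];
  rewrite /xv /yv /zv /Xv /Yv ?compXn ?compM !comp_mpolyXU -!tnth_nth !tnth_mktuple;
  simpl_split.
- by rewrite exprZn -exprM mulnC exprM hz expr1n scale1r.
- by rewrite exprZn -exprM mulnC exprM exprVn hz invr1 expr1n scale1r.
- by rewrite -scalerAl -scalerAr scalerA -exprMn mulfV // expr1n scale1r.
Qed.

Lemma perm_comp s t p : perm_act t (perm_act s p) = perm_act (s * t) p :> {mpoly C[n + n + n]}.
Proof.
rewrite /perm_act /subst_xyz !comp_comp; congr (p \mPo _).
apply: eq_from_tnth => j; rewrite !tnth_mktuple.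
rewrite -(splitK j); case: (split j) => [j'|i]; rewrite unsplitK;
  [rewrite -(splitK j'); case: (split j') => i; rewrite unsplitK|];
  rewrite /xv /yv /zv !comp_mpolyXU -!tnth_nth !tnth_mktuple;
  simpl_split; by rewrite permM.
Qed.

Lemma phi_gen (i : 'I_n) : phi r (xv C i * yv C i - zv C i ^+ r) = 0.
Proof.
rewrite /phi /subst_xyz compB compM compXn /xv /yv /zv !comp_mpolyXU
  -!tnth_nth !tnth_mktuple; simpl_split.
by rewrite exprMn subrr.
Qed.

Definition psi d (q : {mpoly C[n + n]}) : {mpoly C[n + n + n]} :=
  \sum_(m : 'X_{1..(n + n) < d}) q@_m *: 'X_[wmn r m].

Lemma psiD d p q : psi d (p + q) = psi d p + psi d q.
Proof. by rewrite /psi -big_split; apply: eq_bigr => m _; rewrite mcoeffD scalerDl. Qed.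
Lemma psi0 d : psi d 0 = 0.
Proof. by rewrite /psi big1 // => m _; rewrite mcoeff0 scale0r. Qed.
Lemma psiZ d c q : psi d (c *: q) = c *: psi d q.
Proof. by rewrite /psi scaler_sumr; apply: eq_bigr => m _; rewrite mcoeffZ scalerA. Qed.
Lemma psi_sum d T (s : seq T) (P : pred T) F :
  psi d (\sum_(t <- s | P t) F t) = \sum_(t <- s | P t) psi d (F t).
Proof. exact: (big_morph _ (psiD d) (psi0 d)). Qed.
Lemma psiX d (m : 'X_{1..n + n}) (h : (mdeg m < d)%N) : psi d 'X_[m] = 'X_[wmn r m].
Proof.
rewrite /psi (bigD1 (BMultinom h)) //= mcoeffX eqxx scale1r big1 ?addr0 //.
move=> m' ne; rewrite mcoeffX; case: eqP => [e|_]; last by rewrite scale0r.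
by case/eqP: ne; apply: val_inj; rewrite /= e.
Qed.

Lemma kerI p : (0 < r)%N -> phi r p = 0 -> I p.
Proof.
move=> r0 h0.
pose d := (\max_(m <- msupp p) (mdeg (emn r m)).+1)%N.
have e1 : psi d (phi r p) = \sum_(m <- msupp p) p@_m *: 'X_[wmn r (emn r m)].
  rewrite {1}[p]mpolyE phi_sum psi_sum big_seq_cond [RHS]big_seq_cond.
  apply: eq_bigr => m /andP [hm _]; rewrite phiZ phiX psiZ psiX //.
  by apply: (@leq_bigmax_seq _ _ xpredT (fun m => (mdeg (emn r m)).+1)%N).
rewrite h0 psi0 in e1.
rewrite -[p]subr0 [X in _ - X]e1 {1}[p]mpolyE -sumrB; apply: inIsum => m _.
rewrite -scalerBr -mul_mpolyC; apply: inIM; exact: F2.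
Qed.

Lemma surj0 q : (0 < r)%N ->
  (forall m, m \in msupp q -> forall i, m (LX i) = m (LY i) %[mod r]) ->
  phi r (psi (msize q) q) = q.
Proof.
move=> r0 hq; rewrite /psi phi_sum [RHS](mpolywE (leqnn (msize q))).
apply: eq_bigr => m _; rewrite phiZ phiX.
case: (boolP (val m \in msupp q)) => hm; first by rewrite F3 // => i; apply: hq.
by rewrite memN_msupp_eq0 // !scale0r.
Qed.

Lemma coef_scaled (q : {mpoly C[n + n]}) (T : (n + n).-tuple {mpoly C[n + n]})
  (kappa : 'X_{1..n + n} -> C) :
  (forall m, 'X_[m] \mPo T = kappa m *: 'X_[m]) ->
  forall m, (q \mPo T)@_m = kappa m * q@_m.
Proof.
move=> hk m; rewrite comp_mpolyEX raddf_sum [in RHS](mpolyE q) raddf_sum mulr_sumr /=.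
apply: eq_bigr => m' _; rewrite hk scalerA !mcoeffZ mcoeffX.
by case: eqP => [->|_]; rewrite ?mulr0 ?mulr1 // mulrC.
Qed.

Lemma F4 (zeta : C) (hzeta : r.-primitive_root zeta) (r0 : (0 < r)%N) q :
  wreath_invariant r zeta q ->
  forall m, m \in msupp q -> forall i, m (LX i) = m (LY i) %[mod r].
Proof.
move=> hq m hm i.
case: (ltnP 1 r) => hr1; last first.
  have r1 : r = 1%N by apply/eqP; rewrite eqn_leq hr1 r0.
  by rewrite r1 !modn1.
have hz := prim_expr_order hzeta.
have hz0 : zeta != 0.
  by apply/eqP => z0; move: hz; rewrite z0 expr0n gtn_eqF // => /eqP; rewrite eq_sym oner_eq0.
pose a := fun j : 'I_n => if j == i then Ordinal hr1 else Ordinal r0.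
pose kappa := fun m : 'X_{1..n + n} =>
  \prod_(j < n) ((zeta ^+ a j) ^+ m (LX j) * (zeta^-1 ^+ a j) ^+ m (LY j)).
have hk : forall m', 'X_[m'] \mPo [tuple match split j with
                | inl i => (zeta ^+ a i) *: Xv C ((1%g : {perm 'I_n}) i)
                | inr i => (zeta^-1 ^+ a i) *: Yv C ((1%g : {perm 'I_n}) i)
                end | j < n + n] = kappa m' *: 'X_[m'].
  move=> m'; have := subst_XYX (fun i => (zeta ^+ a i) *: Xv C ((1%g : {perm 'I_n}) i))
     (fun i => (zeta^-1 ^+ a i) *: Yv C ((1%g : {perm 'I_n}) i)) m'.
  rewrite /subst_XY => ->; rewrite [in RHS]XE2 /kappa -scaler_prod.
  by apply: eq_bigr => j _; rewrite !perm1 !exprZn -scalerAl -scalerAr scalerA.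
have := coef_scaled q hk m; rewrite -/(subst_XY _ _ q) -/(wreath_act zeta a 1 q) hq.
move/esym/eqP; rewrite -subr_eq0 -{2}[q@_m]mul1r -mulrBl mulf_eq0.
rewrite mcoeff_eq0 hm orbF subr_eq0 => /eqP hk1.
have : kappa m = zeta ^+ m (LX i) * zeta^-1 ^+ m (LY i).
  rewrite /kappa (bigD1 i) //= big1 ?mulr1 => [|j /negbTE hj].
    by rewrite /a eqxx !expr1.
  by rewrite /a hj !expr0 !expr1n mulr1.
rewrite hk1 exprVn => /esym h1.
apply/eqP; rewrite -(eq_prim_root_expr hzeta).
by rewrite -[X in X == _](divfK (expf_neq0 (m (LY i)) hz0)) h1 mul1r.
Qed.

End D.

Lemma phiM (C : fieldType) n r (p q : {mpoly C[n + n + n]}) :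
  phi r (p * q) = phi r p * phi r q.
Proof. exact: compM. Qed.

Unset Implicit Arguments.
Set Strict Implicit.

Theorem proposition1 (C : numClosedFieldType) (r n : nat)
  (hr : (1 <= r)%N) (hn : (1 <= n)%N) (zeta : C)
  (hzeta : r.-primitive_root zeta) :
  (forall p : {mpoly C[n + n + n]}, Sn_invariant p ->
     wreath_invariant r zeta (phi r p)) /\
  (forall p : {mpoly C[n + n + n]}, Sn_invariant p ->
     (phi r p = 0 <-> in_In r p)) /\
  (forall q : {mpoly C[n + n]}, wreath_invariant r zeta q ->
     exists2 p : {mpoly C[n + n + n]}, Sn_invariant p & phi r p = q).
Proof.
have hz := prim_expr_order hzeta.
have hz0 : zeta != 0.
  by apply/eqP => z0; move: hz; rewrite z0 expr0n gtn_eqF // => /eqP; rewrite eq_sym oner_eq0.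
split; [|split].
- by move=> p hp a s; rewrite -phi_perm // hp.
- move=> p hp; split; first exact: kerI.
  case=> c ->; rewrite phi_sum big1 // => i _.
  by rewrite phiM phi_gen mulr0.
- move=> q hq.
  have cong := F4 hzeta hr hq.
  have hp0 := surj0 hr cong.
  set p0 := psi _ _ q in hp0.
  exists ((n`!%:R)^-1 *: \sum_(s : 'S_n) perm_act s p0).
  + move=> t; rewrite permZ perm_sum; congr (_ *: _).
    under eq_bigr do rewrite perm_comp.
    by rewrite [RHS](reindex_inj (mulIg t)).
  + pose a0 := fun _ : 'I_n => (Ordinal hr : 'I_r).
    rewrite phiZ phi_sum.
    under eq_bigr do rewrite (phi_perm hz hz0 a0) hp0 hq.
    rewrite sumr_const (_ : #|_| = n`!) ?card_Sn //.
    by rewrite -scaler_nat scalerA mulVf ?scale1r // pnatr_eq0 -lt0n fact_gt0.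
Qed.
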